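(* Let $\delta>0$, $T\ge2$, and suppose the step sizes are $\eta_k=\dfrac{1}{\delta\log T\log(k+3)\sqrt{k+1}}$. For $1\le t\le T$ let $u_t:=\max\{0,\lceil\log(C\sqrt t)/\log(1/\alpha)\rceil\}$ (so that $C\alpha^{u_t}\le1/\sqrt t$). Then \begin{align*} \mathbb E\Big[\sum_{k=0}^{t-1}\eta_k\langle\boldsymbol b_k,\boldsymbol\theta_k-\boldsymbol\theta^*\rangle\Big] &\le 8C\,\mathbb E\Big[d_0\ell_0\sum_{k=0}^{u_t}\frac{1}{\delta\log T\log(k+3)\sqrt{k+1}}\Big] +8\,\mathbb E\Big[\sum_{k=u_t+1}^{t-1}\frac{d_{k-u_t}\ell_{k-u_t}}{\delta\log T\log(k+3)\sqrt{k+1}\sqrt t}\Big]\\ &\quad+\frac{2}{\delta^2\log^2T}\,\mathbb E\Big[\sum_{k=0}^{u_t}\frac{\ell_k+2\phi_\infty^2d_0}{\sqrt{k+1}\log(k+3)}\sum_{i=1}^{k}\frac{\ell_{i-1}}{\log(i+2)\sqrt i}\Big]\\ &\quad+\frac{2}{\delta^2\log^2T}\,\mathbb E\Big[\sum_{k=u_t+1}^{t-1}\frac{\ell_k+2\phi_\infty^2d_{k-u_t}}{\log(k+3)\log(k-u_t+3)\sqrt{k+1}}\sum_{i=k-u_t+1}^{k}\frac{\ell_{i-1}}{\sqrt i}\Big]. \end{align*}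
   Context: Setting. $\mathcal S$ finite; $\boldsymbol P$ irreducible aperiodic with stationary distribution $\boldsymbol\pi$; $C>0,\alpha\in(0,1)$ with $\|\boldsymbol P^t(s,\cdot)-\boldsymbol\pi\|_{\mathrm{TV}}\le C\alpha^t$ for all $s,t$. Rewards $0\le r(s,s')\le r_\infty$, discount $\gamma\in(0,1)$, features $\|\boldsymbol\phi(s)\|_2\le\phi_\infty$, $\boldsymbol\theta^*$ the TD fixed point ($\bar{\boldsymbol g}(\boldsymbol\theta^* )=0$). For $o=(s,s')$, $\boldsymbol g(\boldsymbol\theta,o)=(r(s,s')+\gamma\boldsymbol\phi(s')^\top\boldsymbol\theta-\boldsymbol\phi(s)^\top\boldsymbol\theta)\boldsymbol\phi(s)$, $\bar{\boldsymbol g}(\boldsymbol\theta)=\sum_{s,s'}\pi(s)P(s,s')\boldsymbol g(\boldsymbol\theta,(s,s'))$. Trajectory $s_0,s_1,\dots$, $O_t=(s_t,s_{t+1})$, $\mathcal F_t=\sigma(O_0,\dots,O_t)$. TD(0): $\boldsymbol\theta_0=0$, $\boldsymbol\theta_{t+1}=\boldsymbol\theta_t+\eta_t\boldsymbol g(\boldsymbol\theta_t,O_t)$. Notation: $d_t=\|\boldsymbol\theta_t-\boldsymbol\theta^*\|_2$, $\ell_t=r_\infty\phi_\infty+2\phi_\infty^2\|\boldsymbol\theta_t\|_2$, $\boldsymbol b_t=\mathbb E[\boldsymbol g(\boldsymbol\theta_t,O_t)\mid\mathcal F_{t-1}]-\bar{\boldsymbol g}(\boldsymbol\theta_t)$.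 Logarithms natural; empty sums are $0$. *)

(* Defs.v *)
From mathcomp Require Import all_boot all_order all_algebra.
From mathcomp Require Import all_classical all_reals all_analysis.
Set Implicit Arguments. Unset Strict Implicit. Unset Printing Implicit Defensive.
Import Order.TTheory GRing.Theory Num.Theory.
Local Open Scope ring_scope.

Definition vdot (R : realType) (d : nat) (u v : 'rV[R]_d) : R :=
  \sum_(i < d) u ord0 i * v ord0 i.
Definition vnorm (R : realType) (d : nat) (u : 'rV[R]_d) : R := Num.sqrt (vdot u u).

Fixpoint Pn (R : realType) (S : finType) (P : S -> S -> R) (t : nat) (s s' : S) : R :=
  match t with
  | 0 => if s == s' then 1 else 0
  | t'.+1 => \sum_(x : S) Pn P t' s x * P x s'
  end.

Definition tv_dist (R : realType) (S : finType) (p q : S -> R) : R :=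
  2^-1 * \sum_(s : S) `|p s - q s|.

Definition is_pdistr (R : realType) (S : finType) (p : S -> R) : Prop :=
  (forall s, 0 <= p s) /\ \sum_(s : S) p s = 1.

Definition stochastic (R : realType) (S : finType) (P : S -> S -> R) : Prop :=
  forall s, is_pdistr (P s).

Definition irreducible (R : realType) (S : finType) (P : S -> S -> R) : Prop :=
  forall s s', exists t, 0 < Pn P t s s'.

Definition aperiodic (R : realType) (S : finType) (P : S -> S -> R) : Prop :=
  forall s (m : nat), (forall t, (0 < t)%N -> 0 < Pn P t s s -> (m %| t)%N) -> m = 1%N.

Definition stationary (R : realType) (S : finType) (P : S -> S -> R) (pi : S -> R) : Prop :=
  is_pdistr pi /\ forall s', \sum_(s : S) pi s * P s s' = pi s'.

Definition td_g (R : realType) (S : finType) (d : nat) (r : S -> S -> R) (gamma : R)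
  (phi : S -> 'rV[R]_d) (theta : 'rV[R]_d) (s s' : S) : 'rV[R]_d :=
  (r s s' + gamma * vdot (phi s') theta - vdot (phi s) theta) *: phi s.

Definition td_gbar (R : realType) (S : finType) (d : nat) (pi : S -> R) (P : S -> S -> R)
  (r : S -> S -> R) (gamma : R) (phi : S -> 'rV[R]_d) (theta : 'rV[R]_d) : 'rV[R]_d :=
  \sum_(s : S) \sum_(s' : S) (pi s * P s s') *: td_g r gamma phi theta s s'.

Fixpoint td_iter (R : realType) (S : finType) (d : nat)
  (g : 'rV[R]_d -> S -> S -> 'rV[R]_d) (eta : nat -> R) (s : nat -> S) (k : nat) : 'rV[R]_d :=
  match k with
  | 0 => 0
  | k'.+1 => td_iter g eta s k' + eta k' *: g (td_iter g eta s k') (s k') (s k'.+1)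
  end.

Definition path_of (S : finType) (N : nat) (x : {ffun 'I_N.+1 -> S}) : nat -> S :=
  fun i => x (inord i).

Definition path_weight (R : realType) (S : finType) (mu : S -> R) (P : S -> S -> R)
  (N : nat) (x : {ffun 'I_N.+1 -> S}) : R :=
  mu (path_of x 0) * \prod_(i < N) P (path_of x i) (path_of x i.+1).

(* Expectation of a functional of the trajectory depending only on s_0..s_N. *)
Definition Ex (R : realType) (S : finType) (mu : S -> R) (P : S -> S -> R) (N : nat)
  (F : (nat -> S) -> R) : R :=
  \sum_(x : {ffun 'I_N.+1 -> S}) path_weight mu P x * F (path_of x).

(* Conditional expectation of a vector functional F of s_0..s_N given
   sigma(s_0, ..., s_{m-1}) (m = 0: trivial sigma-algebra), evaluated at trajectory s. *)
Definition condEx (R : realType) (S : finType) (d : nat) (mu : S -> R) (P : S -> S -> R)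
  (N m : nat) (F : (nat -> S) -> 'rV[R]_d) (s : nat -> S) : 'rV[R]_d :=
  let A := [pred x : {ffun 'I_N.+1 -> S} |
             [forall i : 'I_N.+1, (i < m)%N ==> (x i == s i)]] in
  (\sum_(x in A) path_weight mu P x)^-1 *: \sum_(x in A) path_weight mu P x *: F (path_of x).

Definition ut (R : realType) (C alpha : R) (t : nat) : nat :=
  `|Num.max 0%Z (Num.ceil (ln (C * Num.sqrt t%:R) / ln alpha^-1))|%N.

(* Main.v *)
Require Import Defs.
From mathcomp Require Import all_boot all_order all_algebra.
From mathcomp Require Import all_classical all_reals all_analysis.
Import Order.TTheory GRing.Theory Num.Theory.
Local Open Scope ring_scope.


From mathcomp Require Import ring lra.
Set Implicit Arguments. Unset Strict Implicit. Unset Printing Implicit Defensive.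


Section Vec.
Variables (R : realType) (d : nat).
Implicit Types (u v w : 'rV[R]_d).

Lemma vdotC u v : vdot u v = vdot v u.
Proof. by rewrite /vdot; apply: eq_bigr => i _; rewrite mulrC. Qed.

Lemma vdotDl u v w : vdot (u + v) w = vdot u w + vdot v w.
Proof. by rewrite /vdot -big_split; apply: eq_bigr => i _; rewrite mxE mulrDl. Qed.

Lemma vdotZl (a : R) u v : vdot (a *: u) v = a * vdot u v.
Proof. by rewrite /vdot mulr_sumr; apply: eq_bigr => i _; rewrite mxE mulrA. Qed.

Lemma vdotNl u v : vdot (- u) v = - vdot u v.
Proof. by rewrite -scaleN1r vdotZl mulN1r. Qed.

Lemma vdotBl u v w : vdot (u - v) w = vdot u w - vdot v w.
Proof. by rewrite vdotDl vdotNl. Qed.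

Lemma vdotDr u v w : vdot w (u + v) = vdot w u + vdot w v.
Proof. by rewrite vdotC vdotDl !(vdotC w). Qed.

Lemma vdotZr (a : R) u v : vdot v (a *: u) = a * vdot v u.
Proof. by rewrite vdotC vdotZl vdotC. Qed.

Lemma vdotBr u v w : vdot w (u - v) = vdot w u - vdot w v.
Proof. by rewrite vdotC vdotBl !(vdotC w). Qed.

Lemma vdot0l v : vdot 0 v = 0.
Proof. by rewrite /vdot big1 // => i _; rewrite mxE mul0r. Qed.

Lemma vdot_suml (I : finType) (Q : pred I) (F : I -> 'rV[R]_d) v :
  vdot (\sum_(i | Q i) F i) v = \sum_(i | Q i) vdot (F i) v.
Proof.
rewrite /vdot exchange_big /=; apply: eq_bigr => j _.
by rewrite summxE mulr_suml.
Qed.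

Lemma vdot_ge0 u : 0 <= vdot u u.
Proof. by rewrite /vdot sumr_ge0 // => i _; rewrite -expr2 sqr_ge0. Qed.

Lemma vnorm_ge0 u : 0 <= vnorm u.
Proof. exact: sqrtr_ge0. Qed.

Lemma vnorm_sq u : vnorm u ^+ 2 = vdot u u.
Proof. by rewrite /vnorm sqr_sqrtr // vdot_ge0. Qed.

Lemma CS_sq u v : vdot u v ^+ 2 <= vdot u u * vdot v v.
Proof.
set a := vdot u u; set b := vdot u v; set c := vdot v v.
have H x : 0 <= a - 2 * x * b + x ^+ 2 * c.
  have := vdot_ge0 (u - x *: v).
  rewrite vdotBl !vdotBr !vdotZl !vdotZr (vdotC v u) -/a -/b -/c.
  move=> h; lra.
have ha : 0 <= a by exact: vdot_ge0.
have hc : 0 <= c by exact: vdot_ge0.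
have [c0|cpos] := eqVneq c 0.
  have [b0|bn0] := eqVneq b 0; first by rewrite b0 c0 expr0n /= mulr0.
  have := H ((a + 1) / (2 * b)).
  have e : 2 * ((a + 1) / (2 * b)) * b = a + 1 by field; rewrite bn0.
  rewrite c0 mulr0 addr0 e.
  move=> h; lra.
have cp : 0 < c by rewrite lt0r cpos.
have := H (b / c).
have e1 : 2 * (b / c) * b = 2 * (b ^+ 2 / c) by field; rewrite cpos.
have e2 : (b / c) ^+ 2 * c = b ^+ 2 / c by field; rewrite cpos.
rewrite e1 e2 => h.
have : b ^+ 2 / c <= a by lra.
by rewrite ler_pdivrMr // mulrC.
Qed.

Lemma CS u v : `|vdot u v| <= vnorm u * vnorm v.
Proof.
rewrite /vnorm -sqrtrM ?vdot_ge0 // -sqrtr_sqr.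
by rewrite ler_sqrt ?CS_sq // mulr_ge0 ?vdot_ge0.
Qed.

Lemma vdot_le u v : vdot u v <= vnorm u * vnorm v.
Proof. exact: le_trans (ler_norm _) (CS u v). Qed.

Lemma vnormZ (a : R) u : vnorm (a *: u) = `|a| * vnorm u.
Proof.
by rewrite /vnorm vdotZl vdotZr mulrA -expr2 sqrtrM ?sqr_ge0 // sqrtr_sqr.
Qed.

Lemma vnormN u : vnorm (- u) = vnorm u.
Proof. by rewrite -scaleN1r vnormZ normrN normr1 mul1r. Qed.

Lemma vnormD u v : vnorm (u + v) <= vnorm u + vnorm v.
Proof.
have h1 := vnorm_ge0 u; have h2 := vnorm_ge0 v.
rewrite -(ger0_norm (addr_ge0 h1 h2)) -sqrtr_sqr /vnorm ler_sqrt ?sqr_ge0 //.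
rewrite vdotDl !vdotDr (vdotC v u) sqrrD -/(vnorm u) -/(vnorm v).
rewrite !vnorm_sq /vnorm.
have := vdot_le u v; rewrite /vnorm => h; lra.
Qed.

Lemma vnormB u v : vnorm (u - v) = vnorm (v - u).
Proof. by rewrite -vnormN opprB. Qed.

End Vec.

Definition depl {S : finType} {A : Type} (m : nat) (G : (nat -> S) -> A) :=
  forall s s', (forall i, (i < m)%N -> s i = s' i) -> G s = G s'.

Section Paths.
Variables (R : realType) (S : finType) (mu : S -> R) (P : S -> S -> R).
Hypothesis hmu : forall s, 0 <= mu s.
Hypothesis hP : forall s s', 0 <= P s s'.
Hypothesis hPs : forall s, \sum_s' P s s' = 1.

Lemma pw_ge0 N (x : {ffun 'I_N.+1 -> S}) : 0 <= path_weight mu P x.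
Proof. by rewrite /path_weight mulr_ge0 // prodr_ge0. Qed.

Lemma Ex_ext N F G : (forall x : {ffun 'I_N.+1 -> S}, F (path_of x) = G (path_of x)) ->
  Ex mu P N F = Ex mu P N G.
Proof. by move=> h; apply: eq_bigr => x _; rewrite h. Qed.

Lemma Ex_le N F G : (forall x : {ffun 'I_N.+1 -> S}, F (path_of x) <= G (path_of x)) ->
  Ex mu P N F <= Ex mu P N G.
Proof. by move=> h; apply: ler_sum => x _; rewrite ler_wpM2l ?pw_ge0. Qed.

Lemma ExD N F G : Ex mu P N (fun s => F s + G s) = Ex mu P N F + Ex mu P N G.
Proof. by rewrite /Ex -big_split; apply: eq_bigr => x _; rewrite mulrDr. Qed.

Lemma ExB N F G : Ex mu P N (fun s => F s - G s) = Ex mu P N F - Ex mu P N G.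
Proof. by rewrite /Ex -sumrB; apply: eq_bigr => x _; rewrite mulrBr. Qed.

Lemma ExZ N (a : R) F : Ex mu P N (fun s => a * F s) = a * Ex mu P N F.
Proof. by rewrite /Ex mulr_sumr; apply: eq_bigr => x _; rewrite mulrCA. Qed.

Lemma Ex_sum N (I : Type) (r : seq I) (Q : pred I) (F : I -> (nat -> S) -> R) :
  Ex mu P N (fun s => \sum_(i <- r | Q i) F i s) = \sum_(i <- r | Q i) Ex mu P N (F i).
Proof.
rewrite /Ex exchange_big /=; apply: eq_bigr => x _; by rewrite mulr_sumr.
Qed.

Section Split.
Variable N : nat.
Definition pext (p : {ffun 'I_N.+1 -> S} * S) : {ffun 'I_N.+2 -> S} :=
  [ffun i : 'I_N.+2 => if (i <= N)%N then p.1 (inord i) else p.2].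
Definition pres (x : {ffun 'I_N.+2 -> S}) : {ffun 'I_N.+1 -> S} * S :=
  ([ffun i : 'I_N.+1 => x (inord i)], x ord_max).

Lemma pext_bij : bijective pext.
Proof.
exists pres.
- case=> x z; rewrite /pres /pext /=; congr pair; last by rewrite ffunE ltnn.
  apply/ffunP => i; rewrite !ffunE.
  have hi : (i < N.+2)%N by rewrite ltnS ltnW.
  rewrite inordK // -ltnS ltn_ord; congr (x _); apply: val_inj => /=.
  by rewrite inordK.
- move=> x; apply/ffunP => i; rewrite /pres /pext !ffunE /=.
  case: ifP => hi.
    congr (x _); apply: val_inj => /=.
    by rewrite !inordK // ltnS // ltnW.
  congr (x _); apply: val_inj => /=.
  by have := ltn_ord i; rewrite ltnS leq_eqVlt ltnS hi orbF => /eqP.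
Qed.

Lemma path_pext1 x z i : (i <= N)%N -> path_of (pext (x, z)) i = path_of x i.
Proof. by move=> hi; rewrite /path_of /pext ffunE inordK ?hi // ltnS ltnW. Qed.

Lemma path_pext2 x z : path_of (pext (x, z)) N.+1 = z.
Proof. by rewrite /path_of /pext ffunE inordK ?ltnn. Qed.

Lemma pw_pext x z : path_weight mu P (pext (x, z)) = path_weight mu P x * P (path_of x N) z.
Proof.
rewrite /path_weight big_ord_recr /= path_pext1 // path_pext2 path_pext1 // -mulrA.
congr (_ * _); congr (_ * _); apply: eq_bigr => i _.
by rewrite !path_pext1 // ltnW.
Qed.

Lemma Ex_split (G : (nat -> S) -> S -> R) : (forall z, depl N.+1 (G^~ z)) ->
  Ex mu P N.+1 (fun s => G s (s N.+1)) = Ex mu P N (fun s => \sum_z P (s N) z * G s z).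
Proof.
move=> hG; rewrite /Ex (reindex pext); last by apply: onW_bij; exact: pext_bij.
rewrite -(pair_big predT predT (fun x z => path_weight mu P (pext (x, z)) *
   G (path_of (pext (x, z))) (path_of (pext (x, z)) N.+1))) /=.
apply: eq_bigr => x _; rewrite mulr_sumr; apply: eq_bigr => z _.
rewrite pw_pext path_pext2 -mulrA; congr (_ * _); congr (_ * _).
by apply: hG => i hi; rewrite path_pext1.
Qed.
End Split.

Lemma Ex_marg1 N (G : (nat -> S) -> R) : depl N.+1 G ->
  Ex mu P N.+1 G = Ex mu P N G.
Proof.
move=> hG; have := @Ex_split N (fun s _ => G s) (fun _ => hG) => /= ->.
by apply: Ex_ext => x; rewrite -mulr_suml hPs mul1r.
Qed.

Lemma depl_mono {A : Type} {m n : nat} {G : (nat -> S) -> A} : (m <= n)%N -> depl m G -> depl n G.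
Proof. by move=> hmn hG s s' h; apply: hG => i hi; apply: h; exact: leq_trans hi hmn. Qed.

Lemma Ex_marg N n (G : (nat -> S) -> R) : depl N.+1 G -> (N <= n)%N ->
  Ex mu P n G = Ex mu P N G.
Proof.
move=> hG; elim: n => [|n IH]; first by rewrite leqn0 => /eqP ->.
rewrite leq_eqVlt => /orP [/eqP -> //| hn].
rewrite Ex_marg1 ?IH //; exact: depl_mono _ hG.
Qed.

Lemma Ex_onestep N i (G : (nat -> S) -> S -> R) : (i < N)%N -> (forall z, depl i.+1 (G^~ z)) ->
  Ex mu P N (fun s => G s (s i.+1)) = Ex mu P N (fun s => \sum_z P (s i) z * G s z).
Proof.
move=> hi hG.
have h1 : depl i.+2 (fun s => G s (s i.+1)).
  move=> s s' h; rewrite (h i.+1) //; apply: hG => j hj; apply: h; exact: ltnW.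
have h2 : depl i.+1 (fun s => \sum_z P (s i) z * G s z).
  move=> s s' h; rewrite (h i) //; apply: eq_bigr => z _; congr (_ * _); exact: hG.
have e1 := @Ex_marg i.+1 N _ h1 hi.
have e2 := @Ex_marg i N _ h2 (ltnW hi).
have e3 := @Ex_split i G hG.
by rewrite e1 e3 e2.
Qed.

Lemma Ex_multistep N j k (G : (nat -> S) -> S -> R) : (j <= k <= N)%N ->
  (forall z, depl j.+1 (G^~ z)) ->
  Ex mu P N (fun s => G s (s k)) = Ex mu P N (fun s => \sum_y Pn P (k - j) (s j) y * G s y).
Proof.
move=> /andP [hjk hkN]; elim: k hjk hkN G => [|k IH] hjk hkN G hG.
  move: hjk; rewrite leqn0 => /eqP ->; apply: Ex_ext => x /=.
  rewrite (bigD1 (path_of x 0)) //= eqxx mul1r big1 ?addr0 // => y /negbTE.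
  by rewrite eq_sym => ->; rewrite mul0r.
move: hjk; rewrite leq_eqVlt => /orP [/eqP <-| hjk].
  apply: Ex_ext => x /=; rewrite subnn.
  rewrite (bigD1 (path_of x j)) //= eqxx mul1r big1 ?addr0 // => y /negbTE.
  by rewrite eq_sym => ->; rewrite mul0r.
rewrite (@Ex_onestep N k G hkN); last by move=> z; exact: depl_mono hjk (hG z).
rewrite (IH hjk (ltnW hkN) (fun s y => \sum_z P y z * G s z)); last first.
  move=> y s s' h; apply: eq_bigr => z _; congr (_ * _); exact: hG.
apply: Ex_ext => x /=; rewrite subSn //=.
under eq_bigr do rewrite mulr_sumr.
rewrite exchange_big /=; apply: eq_bigr => z _.
by rewrite mulr_suml; apply: eq_bigr => y _; rewrite mulrA.
Qed.

End Paths.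

Section Tower.
Variables (R : realType) (S : finType) (mu : S -> R) (P : S -> S -> R) (d : nat).
Hypothesis hmu : forall s, 0 <= mu s.
Hypothesis hP : forall s s', 0 <= P s s'.

Lemma condEx_depl N m (F : (nat -> S) -> 'rV[R]_d) : depl m (condEx mu P N m F).
Proof.
move=> s s' h; rewrite /condEx.
have e : [pred x : {ffun 'I_N.+1 -> S} | [forall i : 'I_N.+1, (i < m)%N ==> (x i == s i)]]
   =1 [pred x : {ffun 'I_N.+1 -> S} | [forall i : 'I_N.+1, (i < m)%N ==> (x i == s' i)]].
  move=> x /=; apply: eq_forallb => i; case: ltnP => //= hi; by rewrite h.
by rewrite !(eq_bigl _ _ e).
Qed.

Lemma tower N m (F : (nat -> S) -> 'rV[R]_d) (h : (nat -> S) -> 'rV[R]_d) :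
  depl m h ->
  Ex mu P N (fun s => vdot (condEx mu P N m F s) (h s)) = Ex mu P N (fun s => vdot (F s) (h s)).
Proof.
move=> hh.
pose rel (x y : {ffun 'I_N.+1 -> S}) := [forall i : 'I_N.+1, (i < m)%N ==> (y i == path_of x i)].
have relE x y : rel x y = [forall i : 'I_N.+1, (i < m)%N ==> (y i == x i)].
  by apply: eq_forallb => i; rewrite /path_of inord_val.
have relC x y : rel x y = rel y x.
  rewrite !relE; apply: eq_forallb => i; by rewrite eq_sym.
have relT x y z : rel x y -> rel y z -> rel x z.
  rewrite !relE => /forallP h1 /forallP h2; apply/forallP => i; apply/implyP => hi.
  by move/implyP: (h1 i) => /(_ hi) /eqP <-; move/implyP: (h2 i) => /(_ hi).
have relh x y : rel x y -> h (path_of x) = h (path_of y).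
  rewrite relE => /forallP hr; apply: hh => i hi.
  have hv : ((inord i : 'I_N.+1) <= i)%N.
    rewrite /inord /insubd; case: insubP => [u _ -> //| _] /=; exact: leq0n.
  move/implyP: (hr (inord i)) => /(_ (leq_ltn_trans hv hi)) /eqP.
  by rewrite /path_of => ->.
pose w (x : {ffun 'I_N.+1 -> S}) := path_weight mu P x.
pose W x := \sum_(y | rel x y) w y.
have WE x y : rel x y -> W x = W y.
  move=> hxy; apply: eq_bigl => z; apply/idP/idP => hz.
    by apply: relT hz; rewrite relC.
  exact: relT hxy hz.
pose c (y : {ffun 'I_N.+1 -> S}) := vdot (F (path_of y)) (h (path_of y)).
rewrite /Ex /condEx /=.
transitivity (\sum_x \sum_y (if rel x y then w x * (W x)^-1 * (w y * c y) else 0)).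
  apply: eq_bigr => x _; rewrite vdotZl vdot_suml -big_mkcond /= mulr_sumr mulr_sumr.
  apply: eq_bigr => y hy; rewrite vdotZl /c (relh _ _ hy) !mulrA.
  by rewrite /W /w.
rewrite exchange_big /=; apply: eq_bigr => y _.
transitivity (\sum_(x | rel y x) w x * ((W y)^-1 * (w y * c y))).
  rewrite [RHS]big_mkcond /=; apply: eq_bigr => x _; rewrite -relC.
  by case: ifP => // hxy; rewrite -mulrA (WE _ _ hxy).
rewrite -mulr_suml -/(W y) mulrA.
have [W0|Wn0] := eqVneq (W y) 0.
  have : w y = 0.
    apply/eqP; rewrite eq_le pw_ge0 // andbT -W0 /W (bigD1 y) /=; last first.
      by rewrite relE; apply/forallP => i; apply/implyP.
    by rewrite lerDl sumr_ge0 // => z _; rewrite pw_ge0.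
  by move=> e; rewrite W0 !mul0r -/(w y) e mul0r.
by rewrite divff // mul1r.
Qed.
End Tower.

Lemma vnorm0 (R : realType) (d : nat) : vnorm (0 : 'rV[R]_d) = 0.
Proof. by rewrite /vnorm vdot0l sqrtr0. Qed.

Section TD.
Variables (R : realType) (S : finType) (d : nat)
  (P : S -> S -> R) (pi : S -> R) (mu : S -> R) (C alpha : R)
  (r : S -> S -> R) (rinf gamma : R) (phi : S -> 'rV[R]_d) (phiinf : R)
  (thstar : 'rV[R]_d) (eta : nat -> R).
Hypothesis hr : forall s s', 0 <= r s s' <= rinf.
Hypothesis hgam : 0 < gamma < 1.
Hypothesis hphi : forall s, vnorm (phi s) <= phiinf.
Hypothesis heta : forall k, 0 <= eta k.

Local Notation g := (td_g r gamma phi).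
Local Notation theta s k := (td_iter g eta s k).
Definition ellv (th : 'rV[R]_d) := rinf * phiinf + 2 * phiinf ^+ 2 * vnorm th.

Lemma phiinf_ge0 (s0 : S) : 0 <= phiinf.
Proof. exact: le_trans (vnorm_ge0 _) (hphi s0). Qed.
Lemma rinf_ge0 (s0 : S) : 0 <= rinf.
Proof. by have /andP [h1 h2] := hr s0 s0; exact: le_trans h1 h2. Qed.
Lemma ellv_ge0 (s0 : S) th : 0 <= ellv th.
Proof.
have h1 := phiinf_ge0 s0; have h2 := rinf_ge0 s0.
by rewrite /ellv addr_ge0 ?mulr_ge0 ?exprn_ge0 ?vnorm_ge0.
Qed.

Lemma vdot_phi a x : `|vdot (phi a) x| <= phiinf * vnorm x.
Proof. exact: le_trans (CS _ _) (ler_wpM2r (vnorm_ge0 _) (hphi a)). Qed.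

Lemma g_bound th a b : vnorm (g th a b) <= ellv th.
Proof.
have h0 := phiinf_ge0 a; have hn := vnorm_ge0 th.
rewrite /td_g vnormZ /ellv.
have /andP [hr1 hr2] := hr a b.
have h1 := vdot_phi b th; have h2 := vdot_phi a th.
have hc : `|r a b + gamma * vdot (phi b) th - vdot (phi a) th| <= rinf + 2 * phiinf * vnorm th.
  have hg : `|gamma * vdot (phi b) th| <= phiinf * vnorm th.
    rewrite normrM (gtr0_norm (proj1 (andP hgam))).
    have /andP [_ hg1] := hgam.
    apply: le_trans (ler_wpM2r (normr_ge0 _) (ltW hg1)) _; rewrite mul1r //.
  apply: le_trans (ler_normB _ _) _.
  apply: le_trans (lerD (ler_normD _ _) (lexx _)) _.
  rewrite ger0_norm //; lra.
apply: le_trans (ler_pM (normr_ge0 _) (vnorm_ge0 _) hc (hphi a)) _.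
rewrite mulrDl expr2; lra.
Qed.

Lemma g_lip th th' a b : vnorm (g th a b - g th' a b) <= 2 * phiinf ^+ 2 * vnorm (th - th').
Proof.
have h0 := phiinf_ge0 a; have hn := vnorm_ge0 (th - th').
rewrite /td_g -scalerBl vnormZ.
have -> : r a b + gamma * vdot (phi b) th - vdot (phi a) th -
     (r a b + gamma * vdot (phi b) th' - vdot (phi a) th') =
     gamma * vdot (phi b) (th - th') - vdot (phi a) (th - th').
  rewrite !vdotBr; ring.
have h1 := vdot_phi b (th - th'); have h2 := vdot_phi a (th - th').
have hc : `|gamma * vdot (phi b) (th - th') - vdot (phi a) (th - th')| <= 2 * phiinf * vnorm (th - th').
  have hg : `|gamma * vdot (phi b) (th - th')| <= phiinf * vnorm (th - th').
    rewrite normrM (gtr0_norm (proj1 (andP hgam))).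
    have /andP [_ hg1] := hgam.
    apply: le_trans (ler_wpM2r (normr_ge0 _) (ltW hg1)) _; rewrite mul1r //.
  apply: le_trans (ler_normB _ _) _; lra.
apply: le_trans (ler_pM (normr_ge0 _) (vnorm_ge0 _) hc (hphi a)) _.
suff -> : 2 * phiinf ^+ 2 * vnorm (th - th') = 2 * phiinf * vnorm (th - th') * phiinf by [].
ring.
Qed.

Lemma theta_depl k : depl k.+1 (fun s => theta s k).
Proof.
elim: k => [|k IH] s s' h //=.
rewrite (IH s s'); last by move=> i hi; apply: h; exact: ltnW.
by rewrite (h k) ?(h k.+1) // ltnW.
Qed.

Lemma theta_diff s j k : (j <= k)%N ->
  vnorm (theta s k - theta s j) <= \sum_(j <= i < k) eta i * ellv (theta s i).
Proof.
elim: k => [|k IH] hjk.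
  by move: hjk; rewrite leqn0 => /eqP ->; rewrite subrr vnorm0 big_geq.
move: hjk; rewrite leq_eqVlt => /orP [/eqP <-| hjk].
  by rewrite subrr vnorm0 big_geq.
rewrite big_nat_recr //= addrAC.
apply: le_trans (vnormD _ _) _; apply: lerD; first exact: IH.
by rewrite vnormZ ger0_norm // ler_wpM2l // g_bound.
Qed.


Hypothesis hP : forall s s', 0 <= P s s'.
Hypothesis hPs : forall s, \sum_s' P s s' = 1.
Hypothesis hpi : forall s, 0 <= pi s.
Hypothesis hpis : \sum_s pi s = 1.
Hypothesis hmu : forall s, 0 <= mu s.
Hypothesis htv : forall s n, tv_dist (Pn P n s) pi <= C * alpha ^+ n.

Definition Phi th a b := vdot (g th a b) (th - thstar).

Lemma gbar_Phi th : vdot (td_gbar pi P r gamma phi th) (th - thstar) =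
  \sum_a \sum_b pi a * P a b * Phi th a b.
Proof.
rewrite /td_gbar vdot_suml; apply: eq_bigr => a _.
by rewrite vdot_suml; apply: eq_bigr => b _; rewrite vdotZl.
Qed.

Lemma Phi_bound th a b : `|Phi th a b| <= ellv th * vnorm (th - thstar).
Proof.
apply: le_trans (CS _ _) _; apply: ler_wpM2r; [exact: vnorm_ge0|exact: g_bound].
Qed.

Lemma Phi_diff th th' a b : `|Phi th a b - Phi th' a b| <=
  (ellv th + 2 * phiinf ^+ 2 * vnorm (th' - thstar)) * vnorm (th - th').
Proof.
have -> : Phi th a b - Phi th' a b =
   vdot (g th a b) (th - th') + vdot (g th a b - g th' a b) (th' - thstar).
  rewrite /Phi vdotBl !vdotBr; ring.
apply: le_trans (ler_normD _ _) _.
have h1 : `|vdot (g th a b) (th - th')| <= ellv th * vnorm (th - th').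
  apply: le_trans (CS _ _) _; apply: ler_wpM2r; [exact: vnorm_ge0|exact: g_bound].
have h2 : `|vdot (g th a b - g th' a b) (th' - thstar)| <=
    2 * phiinf ^+ 2 * vnorm (th' - thstar) * vnorm (th - th').
  apply: le_trans (CS _ _) _; rewrite mulrAC.
  apply: ler_wpM2r; [exact: vnorm_ge0|exact: g_lip].
rewrite mulrDl; exact: lerD.
Qed.

Lemma piP1 : \sum_a \sum_b pi a * P a b = 1.
Proof. by rewrite -hpis; apply: eq_bigr => a _; rewrite -mulr_sumr hPs mulr1. Qed.

Lemma mix_bound (p : S -> R) (Psi : S -> R) (B : R) : 0 <= B ->
  (forall y, `|Psi y| <= B) ->
  \sum_y p y * Psi y - \sum_y pi y * Psi y <= 2 * tv_dist p pi * B.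
Proof.
move=> hB hPsi; rewrite -sumrB /tv_dist mulrA divff ?mul1r ?pnatr_eq0 //.
rewrite mulr_suml; apply: ler_sum => y _; rewrite -mulrBl.
apply: le_trans (ler_norm _) _; rewrite normrM.
by apply: ler_wpM2l => //; exact: normr_ge0.
Qed.

Definition bk (s : nat -> S) k :=
  condEx mu P k.+1 (if k is 0 then 0%N else k.+1)
      (fun s' => g (theta s' k) (s' k) (s' k.+1)) s
    - td_gbar pi P r gamma phi (theta s k).

Lemma perk N j k : (j <= k)%N -> (k < N)%N ->
 Ex mu P N (fun s => eta k * vdot (bk s k) (theta s k - thstar)) <=
 Ex mu P N (fun s => eta k * (2 * (C * alpha ^+ (k - j)) *
     (ellv (theta s j) * vnorm (theta s j - thstar)) +
   2 * ((ellv (theta s k) + 2 * phiinf ^+ 2 * vnorm (theta s j - thstar)) *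
     \sum_(j <= i < k) eta i * ellv (theta s i)))).
Proof.
move=> hjk hkN.
rewrite !ExZ; apply: ler_wpM2l; first exact: heta.
set m := (if k is 0 then 0%N else k.+1).
have e1 : Ex mu P N (fun s => vdot (bk s k) (theta s k - thstar)) =
   Ex mu P N (fun s => Phi (theta s k) (s k) (s k.+1) -
     \sum_a \sum_b pi a * P a b * Phi (theta s k) a b).
  transitivity (Ex mu P N (fun s => vdot (condEx mu P k.+1 m
      (fun s' => g (theta s' k) (s' k) (s' k.+1)) s) (theta s k - thstar) -
     \sum_a \sum_b pi a * P a b * Phi (theta s k) a b)).
    by apply: Ex_ext => x; rewrite /bk vdotBl gbar_Phi.
  rewrite !ExB; congr (_ - _).
  set G' := (fun s' : nat -> S => g (theta s' k) (s' k) (s' k.+1)).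
  have hm : (m <= k.+1)%N by rewrite /m; case: (k).
  have hd1 : depl k.+2 (fun s => vdot (condEx mu P k.+1 m G' s) (theta s k - thstar)).
    move=> s s' h.
    rewrite (depl_mono (leqW hm) (condEx_depl mu P k.+1 G') h).
    by rewrite (depl_mono (leqnSn _) (@theta_depl k) h).
  rewrite (Ex_marg mu hPs hd1 hkN) tower //; last first.
    rewrite /m; case: (k) => [|k'] s s' h //.
    by rewrite (@theta_depl _ _ _ h).
  symmetry; apply: (Ex_marg mu hPs) => //.
  move=> s s' h; rewrite /Phi (h k) // (h k.+1) //.
  by rewrite (depl_mono (leqnSn _) (@theta_depl k) h).
rewrite e1.
pose Dl s := \sum_(j <= i < k) eta i * ellv (theta s i).
pose Bf s := (ellv (theta s k) + 2 * phiinf ^+ 2 * vnorm (theta s j - thstar)) * Dl s.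
apply: (le_trans (y := Ex mu P N (fun s => (Phi (theta s j) (s k) (s k.+1) -
    \sum_a \sum_b pi a * P a b * Phi (theta s j) a b) + 2 * Bf s))).
  apply: Ex_le => // x; set s := path_of x.
  have hD := theta_diff s hjk.
  have hB a b : `|Phi (theta s k) a b - Phi (theta s j) a b| <= Bf s.
    apply: le_trans (Phi_diff _ _ _ _) _; apply: ler_wpM2l => //.
    by rewrite addr_ge0 ?mulr_ge0 ?exprn_ge0 ?vnorm_ge0 ?(ellv_ge0 (s 0)) ?(phiinf_ge0 (s 0)).
  have h1 := hB (s k) (s k.+1); rewrite ler_norml in h1; case/andP: h1 => _ h1.
  have h2 : \sum_a \sum_b pi a * P a b * Phi (theta s j) a b -
            \sum_a \sum_b pi a * P a b * Phi (theta s k) a b <= Bf s.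
    rewrite -sumrB; apply: (le_trans (y := (\sum_a \sum_b pi a * P a b * Bf s))).
      apply: ler_sum => a _; rewrite -sumrB; apply: ler_sum => b _.
      rewrite -mulrBr; apply: ler_wpM2l; first by rewrite mulr_ge0.
      by have := hB a b; rewrite ler_norml => /andP [h3 _]; lra.
    rewrite (eq_bigr (fun a => (\sum_b pi a * P a b) * Bf s)); last first.
      by move=> a _; rewrite mulr_suml.
    by rewrite -mulr_suml piP1 mul1r.
  lra.
pose Psi s y := \sum_z P y z * Phi (theta s j) y z.
have dPhi z : depl k.+1 (fun s => Phi (theta s j) (s k) z).
  move=> s s' h; rewrite (h k) //.
  by rewrite (depl_mono (hjk : (j.+1 <= k.+1)%N) (@theta_depl j) h).
have dPsi z : depl j.+1 (fun s => Psi s z).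
  by move=> s s' h; rewrite /Psi (@theta_depl _ _ _ h).
have e2 : Ex mu P N (fun s => Phi (theta s j) (s k) (s k.+1)) =
    Ex mu P N (fun s => \sum_y Pn P (k - j) (s j) y * Psi s y).
  have := @Ex_onestep _ _ mu P hPs N k (fun s z => Phi (theta s j) (s k) z) hkN dPhi.
  move=> /= ->.
  have := @Ex_multistep _ _ mu P hPs N j k Psi.
  rewrite hjk ltnW //= => /(_ isT dPsi) <-.
  by [].
have e3 : Ex mu P N (fun s => \sum_a \sum_b pi a * P a b * Phi (theta s j) a b) =
    Ex mu P N (fun s => \sum_y pi y * Psi s y).
  apply: Ex_ext => x; apply: eq_bigr => a _; rewrite /Psi mulr_sumr.
  by apply: eq_bigr => b _; rewrite mulrA.
rewrite ExD ExB e2 e3 -ExB -ExD.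
apply: Ex_le => // x; set s := path_of x; apply: lerD => //.
have hB0 : 0 <= ellv (theta s j) * vnorm (theta s j - thstar).
  by rewrite mulr_ge0 ?vnorm_ge0 ?(ellv_ge0 (s 0)).
apply: le_trans (mix_bound (Pn P (k - j) (s j)) hB0 _) _.
  move=> y; rewrite /Psi.
  apply: le_trans (ler_norm_sum _ _ _) _.
  apply: (le_trans (y := (\sum_z P y z * (ellv (theta s j) * vnorm (theta s j - thstar))))).
    apply: ler_sum => z _; rewrite normrM ger0_norm //.
    by apply: ler_wpM2l => //; exact: Phi_bound.
  by rewrite -mulr_suml hPs mul1r.
apply: ler_wpM2r => //; apply: ler_wpM2l => //; exact: htv.
Qed.

End TD.

Lemma ut_bound (R : realType) (C alpha : R) (t : nat) :
  0 < C -> 0 < alpha < 1 -> (1 <= t)%N ->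
  C * alpha ^+ (ut C alpha t) <= 1 / Num.sqrt t%:R.
Proof.
move=> hC /andP [ha0 ha1] ht.
set u := ut C alpha t.
have hst : 0 < Num.sqrt (t%:R : R) by rewrite sqrtr_gt0 ltr0n.
have hL : 0 < ln (alpha^-1) by apply: ln_gt0; rewrite invf_gt1.
have hCs : 0 < C * Num.sqrt t%:R by rewrite mulr_gt0.
have hu : ln (C * Num.sqrt t%:R) / ln (alpha^-1) <= u%:R.
  rewrite /u /ut natr_absz ger0_norm ?le_max ?lexx //.
  apply: le_trans (ceil_ge _) _; rewrite ler_int le_max lexx orbT //.
have hu' : ln (C * Num.sqrt t%:R) <= u%:R * ln (alpha^-1).
  by rewrite -ler_pdivrMr.
have hau : 0 < alpha ^+ u by rewrite exprn_gt0.
rewrite ler_pdivlMr // mulrAC.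
have hx : 0 < C * Num.sqrt t%:R * alpha ^+ u by rewrite mulr_gt0.
rewrite -(ler_ln (x := C * Num.sqrt t%:R * alpha ^+ u)) ?posrE ?ltr01 // ln1.
rewrite lnM ?posrE // lnXn // -(invrK alpha) lnV ?posrE ?invr_gt0 //.
by rewrite mulNrn subr_le0 -[ln alpha^-1 *+ u]mulr_natl.
Qed.

Lemma final_comb (R : realType) (u t : nat) (F1 F2 F3 F4 : nat -> R) (a b c X : R) :
  a * (X * \sum_(0 <= k < u.+1) F1 k) + b * \sum_(u.+1 <= k < t) F2 k
  + c * \sum_(0 <= k < u.+1) F3 k + c * \sum_(u.+1 <= k < t) F4 k =
  \sum_(0 <= k < u.+1) (a * (X * F1 k) + c * F3 k) +
  \sum_(u.+1 <= k < t) (b * F2 k + c * F4 k).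
Proof.
rewrite !big_split /= -!mulr_sumr.
by rewrite -addrA addrACA.
Qed.

Lemma sum_split_le (R : realType) (u t : nat) (Y Lo Hi : nat -> R) :
  (forall k, (k <= u)%N -> Y k <= Lo k) ->
  (forall k, (u < k)%N -> (k < t)%N -> Y k <= Hi k) ->
  (forall k, 0 <= Lo k) ->
  \sum_(0 <= k < t) Y k <= \sum_(0 <= k < u.+1) Lo k + \sum_(u.+1 <= k < t) Hi k.
Proof.
move=> h1 h2 h3.
case: (leqP t u.+1) => htu.
  rewrite [X in _ <= _ + X]big_geq // addr0.
  rewrite [X in _ <= X](big_cat_nat (n := t)) //=.
  rewrite -[X in X <= _]addr0; apply: lerD.
    apply: ler_sum_nat => k /andP [_ hk]; apply: h1; rewrite -ltnS; exact: leq_trans hk htu.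
  by apply: sumr_ge0 => k _.
rewrite [X in X <= _](big_cat_nat (n := u.+1)); last 2 first.
- by [].
- exact: ltnW.
apply: lerD.
  by apply: ler_sum_nat => k /andP [_ hk]; apply: h1.
by apply: ler_sum_nat => k /andP [hk1 hk2]; apply: h2.
Qed.

Lemma eqle (R : realType) (x y : R) : x = y -> x <= y.
Proof. by move->. Qed.

Lemma case1_bound (R : realType) (C a del lT l3 sq d0 l0 Lk Sig : R) :
  0 < C -> 0 <= a <= 1 -> 0 < del -> 0 < lT -> 0 < l3 -> 0 < sq -> 0 <= d0 -> 0 <= l0 ->
  1 / (del * lT * l3 * sq) * (2 * (C * a) * (l0 * d0) + 2 * (Lk * Sig)) <=
  8 * C * (d0 * l0 * (1 / (del * lT * l3 * sq))) +
  2 / (del ^+ 2 * lT ^+ 2) * (Lk / (sq * l3) * (del * lT * Sig)).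
Proof.
move=> hC /andP [ha0 ha1] hd hT h3 hs hd0 hl0.
have hD : 0 < del * lT * l3 * sq by rewrite !mulr_gt0.
set Q := l0 * d0 * (1 / (del * lT * l3 * sq)).
have hQ : 0 <= Q by rewrite /Q !mulr_ge0 // invr_ge0 ltW.
rewrite mulrDr; apply: lerD.
  have -> : 1 / (del * lT * l3 * sq) * (2 * (C * a) * (l0 * d0)) = 2 * (C * a) * Q.
    by rewrite /Q; ring.
  have -> : 8 * C * (d0 * l0 * (1 / (del * lT * l3 * sq))) = 8 * C * Q by rewrite /Q; ring.
  apply: ler_wpM2r => //.
  have : C * a <= C by rewrite ger_pMr.
  move=> h; lra.
apply: eqle; field.
by rewrite ?mulf_neq0 ?lt0r_neq0.
Qed.

Lemma case2_bound (R : realType) (C a del lT l3 sq st lj3 dj lj Lk Sig Sig2 : R) :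
  0 <= C * a -> C * a <= 1 / st -> 0 < del -> 0 < lT -> 0 < l3 -> 0 < sq -> 0 < st ->
  0 < lj3 -> 0 <= dj -> 0 <= lj -> 0 <= Lk -> Sig <= 1 / (del * lT * lj3) * Sig2 ->
  1 / (del * lT * l3 * sq) * (2 * (C * a) * (lj * dj) + 2 * (Lk * Sig)) <=
  8 * (dj * lj / (del * lT * l3 * sq * st)) +
  2 / (del ^+ 2 * lT ^+ 2) * (Lk / (l3 * lj3 * sq) * Sig2).
Proof.
move=> hCa0 hCa hd hT h3 hs hst hj3 hdj hlj hLk hSig.
have hD : 0 < del * lT * l3 * sq by rewrite !mulr_gt0.
have hD' : 0 <= 1 / (del * lT * l3 * sq) by rewrite divr_ge0 // ltW.
rewrite mulrDr; apply: lerD.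
  set Q := lj * dj * (1 / (del * lT * l3 * sq)).
  have hQ : 0 <= Q by rewrite /Q mulr_ge0 // mulr_ge0.
  have -> : 1 / (del * lT * l3 * sq) * (2 * (C * a) * (lj * dj)) = 2 * (C * a) * Q.
    by rewrite /Q; ring.
  have -> : 8 * (dj * lj / (del * lT * l3 * sq * st)) = 8 * (1 / st) * Q.
    rewrite /Q; field.
    by rewrite ?mulf_neq0 ?lt0r_neq0.
  apply: ler_wpM2r => //.
  have : 0 <= 1 / st by rewrite divr_ge0 // ltW.
  move=> h; lra.
apply: (le_trans (y := 1 / (del * lT * l3 * sq) * (2 * (Lk * (1 / (del * lT * lj3) * Sig2))))).
  apply: ler_wpM2l => //; apply: ler_wpM2l => //; exact: ler_wpM2l.
apply: eqle; field.
by rewrite ?mulf_neq0 ?lt0r_neq0.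
Qed.

Lemma term_le (R : realType) (del lT l li s x : R) :
  0 < del -> 0 < lT -> 0 < l -> l <= li -> 0 < s -> 0 <= x ->
  1 / (del * lT * li * s) * x <= 1 / (del * lT * l) * (x / s).
Proof.
move=> hd hT hl hli hs hx.
have hli' : 0 < li by exact: lt_le_trans hl hli.
have -> : 1 / (del * lT * li * s) * x = (x / s) * (del * lT * li)^-1.
  by field; rewrite ?mulf_neq0 ?lt0r_neq0.
rewrite mulrC div1r; apply: ler_wpM2r; first by rewrite divr_ge0 // ltW.
rewrite lef_pV2 ?posrE ?mulr_gt0 //.
by rewrite ler_pM2l ?mulr_gt0.
Qed.


Unset Implicit Arguments.


Theorem lemmaB1 (R : realType) (S : finType) (d : nat)
  (P : S -> S -> R) (pi : S -> R) (mu : S -> R) (C alpha : R)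
  (r : S -> S -> R) (rinf gamma : R) (phi : S -> 'rV[R]_d) (phiinf : R)
  (thstar : 'rV[R]_d) (delta : R) (T t : nat) :
  stochastic P -> irreducible P -> aperiodic P -> stationary P pi ->
  0 < C -> 0 < alpha < 1 ->
  (forall (s : S) (n : nat), tv_dist (Pn P n s) pi <= C * alpha ^+ n) ->
  (forall s s', 0 <= r s s' <= rinf) -> 0 < gamma < 1 ->
  (forall s, vnorm (phi s) <= phiinf) ->
  td_gbar pi P r gamma phi thstar = 0 ->
  is_pdistr mu ->
  0 < delta -> (2 <= T)%N -> (1 <= t <= T)%N ->
  let eta := fun k : nat =>
    1 / (delta * ln T%:R * ln (k + 3)%:R * Num.sqrt (k + 1)%:R) in
  let g := td_g r gamma phi in
  let theta := fun s : nat -> S => td_iter g eta s in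
  let dd := fun (s : nat -> S) (k : nat) => vnorm (theta s k - thstar) in
  let ell := fun (s : nat -> S) (k : nat) =>
    rinf * phiinf + 2 * phiinf ^+ 2 * vnorm (theta s k) in
  let b := fun (s : nat -> S) (k : nat) =>
    condEx mu P k.+1 (if k is 0 then 0%N else k.+1)
      (fun s' => g (theta s' k) (s' k) (s' k.+1)) s
    - td_gbar pi P r gamma phi (theta s k) in
  let u := ut C alpha t in
  let E := Ex mu P (t + u).+1 in
  E (fun s => \sum_(0 <= k < t) eta k * vdot (b s k) (theta s k - thstar))
  <= 8 * C * E (fun s => dd s 0 * ell s 0 *
         \sum_(0 <= k < u.+1)
           1 / (delta * ln T%:R * ln (k + 3)%:R * Num.sqrt (k + 1)%:R))
   + 8 * E (fun s => \sum_(u.+1 <= k < t)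
           dd s (k - u)%N * ell s (k - u)%N /
           (delta * ln T%:R * ln (k + 3)%:R * Num.sqrt (k + 1)%:R * Num.sqrt t%:R))
   + 2 / (delta ^+ 2 * ln T%:R ^+ 2) *
       E (fun s => \sum_(0 <= k < u.+1)
           (ell s k + 2 * phiinf ^+ 2 * dd s 0) / (Num.sqrt (k + 1)%:R * ln (k + 3)%:R)
           * \sum_(1 <= i < k.+1) ell s i.-1 / (ln (i + 2)%:R * Num.sqrt i%:R))
   + 2 / (delta ^+ 2 * ln T%:R ^+ 2) *
       E (fun s => \sum_(u.+1 <= k < t)
           (ell s k + 2 * phiinf ^+ 2 * dd s (k - u)%N)
             / (ln (k + 3)%:R * ln (k - u + 3)%N%:R * Num.sqrt (k + 1)%:R)
           * \sum_((k - u).+1 <= i < k.+1) ell s i.-1 / Num.sqrt i%:R).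

Proof.
move=> hsto _ _ [hpid hstat] hC ha htv hr hg hphi _ [hmu0 hmu1] hdel hT /andP[ht1 htT].
cbv zeta.
set eta := (fun k : nat => 1 / (delta * ln T%:R * ln (k + 3)%:R * Num.sqrt (k + 1)%:R)).
set u := ut C alpha t.
set theta := td_iter (td_g r gamma phi) eta.
have hP s s' : 0 <= P s s' by have [h _] := hsto s; exact: h.
have hPs s : \sum_s' P s s' = 1 by have [_ h] := hsto s.
have [hpi hpis] := hpid.
have hlT : 0 < ln (T%:R : R) by apply: ln_gt0; rewrite ltr1n.
have hl3 k : 0 < ln ((k + 3)%:R : R) by apply: ln_gt0; rewrite ltr1n addn3.
have hsq k : 0 < Num.sqrt ((k + 1)%:R : R) by rewrite sqrtr_gt0 ltr0n addn1.
have heta k : 0 <= eta k.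
  by rewrite /eta divr_ge0 // ?mulr_ge0 // ltW.
pose jj k := if (k <= u)%N then 0%N else (k - u)%N.
rewrite Ex_sum.
apply: (le_trans (y := \sum_(0 <= k < t) Ex mu P (t + u).+1 (fun s => eta k *
   (2 * (C * alpha ^+ (k - jj k)) * (ellv rinf phiinf (theta s (jj k)) * vnorm (theta s (jj k) - thstar))
   + 2 * ((ellv rinf phiinf (theta s k) + 2 * phiinf ^+ 2 * vnorm (theta s (jj k) - thstar)) *
     \sum_(jj k <= i < k) eta i * ellv rinf phiinf (theta s i)))))).
  apply: ler_sum_nat => k /andP [_ hk].
  apply: (perk thstar hr hg hphi heta hP hPs hpi hpis hmu0 htv).
  - by rewrite /jj; case: ifP => // _; exact: leq_subr.
  - by rewrite ltnS (leq_trans (ltnW hk)) // leq_addr.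
rewrite -Ex_sum -!ExZ -!ExD.
apply: Ex_le => // x; set s := path_of x.
rewrite final_comb.
have hph : 0 <= phiinf := phiinf_ge0 hphi (s 0).
have hri : 0 <= rinf := rinf_ge0 hr (s 0).
have hlv i : 0 <= rinf * phiinf + 2 * phiinf ^+ 2 * vnorm (theta s i).
  by rewrite addr_ge0 ?mulr_ge0 ?exprn_ge0 ?vnorm_ge0.
have hLk i i' : 0 <= rinf * phiinf + 2 * phiinf ^+ 2 * vnorm (theta s i) +
     2 * phiinf ^+ 2 * vnorm (theta s i' - thstar).
  by rewrite addr_ge0 ?mulr_ge0 ?exprn_ge0 ?vnorm_ge0.
have ek k : eta k = 1 / (delta * ln T%:R * ln (k + 3)%:R * Num.sqrt (k + 1)%:R) by [].
rewrite /ellv.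
apply: sum_split_le.
- move=> k hku; rewrite /jj hku subn0.
  have eS : \sum_(1 <= i < k.+1) (rinf * phiinf + 2 * phiinf ^+ 2 * vnorm (theta s i.-1)) /
        (ln (i + 2)%:R * Num.sqrt i%:R) = delta * ln T%:R *
      \sum_(0 <= i < k) eta i * (rinf * phiinf + 2 * phiinf ^+ 2 * vnorm (theta s i)).
    rewrite big_add1 /= mulr_sumr; apply: eq_bigr => i _.
    have e3 : (i.+1 + 2 = i + 3)%N by rewrite -addn1 -addnA.
    have e1 : i.+1 = (i + 1)%N by rewrite addn1.
    rewrite e3 e1 ek; field.
    by rewrite ?mulf_neq0 ?lt0r_neq0.
  rewrite eS ek; apply: case1_bound => //.
  + by rewrite exprn_ge0 ?exprn_ile1 // ltW //; case/andP: ha.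
  + exact: vnorm_ge0.
- move=> k hku hkt; rewrite /jj leqNgt hku /= (subKn (ltnW hku)).
  set j := (k - u)%N.
  have eS : \sum_(j.+1 <= i < k.+1) (rinf * phiinf + 2 * phiinf ^+ 2 * vnorm (theta s i.-1)) /
        Num.sqrt i%:R = \sum_(j <= i < k) (rinf * phiinf + 2 * phiinf ^+ 2 * vnorm (theta s i)) /
        Num.sqrt i.+1%:R.
    by rewrite big_add1.
  rewrite eS ek.
  apply: case2_bound => //.
  + by rewrite mulr_ge0 ?exprn_ge0 // ltW //; case/andP: ha.
  + exact: ut_bound.
  + by rewrite sqrtr_gt0 ltr0n.
  + exact: vnorm_ge0.
  + rewrite mulr_sumr; apply: ler_sum_nat => i /andP [hji hik].
    rewrite ek -[i.+1]addn1; apply: term_le => //.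
    by rewrite ler_ln ?posrE // ler_nat leq_add2r.
- move=> k; apply: addr_ge0.
    rewrite mulr_ge0 ?mulr_ge0 ?vnorm_ge0 ?(ltW hC) //.
    by rewrite invr_ge0 ltW // !mulr_gt0.
  apply: mulr_ge0.
    by rewrite divr_ge0 // mulr_ge0 // exprn_ge0 // ltW.
  apply: mulr_ge0.
    by rewrite divr_ge0 // mulr_ge0 // ltW.
  apply: sumr_ge0 => i _; rewrite divr_ge0 // mulr_ge0 ?sqrtr_ge0 //.
  by rewrite ln_ge0 // ler1n addn2.
Qed.
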